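(* For a countable $L$-structure $\mathbb X$ the following are equivalent: (a) $\mathbb X$ is weakly reversible; (b) for every countable $L$-structure $\mathbb Y$, $\mathbb X\equiv_{\mathcal P_{\infty\omega}}\mathbb Y$ implies $\mathbb Y\cong\mathbb X$; (c) the theory $\mathrm{Th}_{\mathcal P_{\infty\omega}\cup\mathcal N_{\infty\omega}}(\mathbb X)$ of all sentences of $\mathcal P_{\infty\omega}\cup\mathcal N_{\infty\omega}$ true in $\mathbb X$ is $\omega$-categorical, i.e. every countable $L$-structure satisfying all these sentences is isomorphic to $\mathbb X$.
   Context: $L=\langle R_i:i\in I\rangle$ is a relational language, $R_i$ of arity $n_i$. A condensation from $\mathbb X$ onto $\mathbb Y$ is a bijection $F:X\to Y$ such that for all $i\in I$ and $\bar x\in X^{n_i}$, $\bar x\in R_i^{\mathbb X}$ implies $F\bar x\in R_i^{\mathbb Y}$ (where $F\bar x$ is coordinatewise). $\mathbb X\sim_c\mathbb Y$ means there are condensations from $\mathbb X$ onto $\mathbb Y$ and from $\mathbb Y$ onto $\mathbb X$. $\mathbb X$ is weakly reversible iff for every $L$-structure $\mathbb Y$, $\mathbb Y\sim_c\mathbb X$ implies $\mathbb Y\cong\mathbb X$. Formula classes: $\mathcal P_0$ consists of all atomic formulas ($v_\alpha=v_\beta$, $R_i(v_{\alpha_1},\dots,v_{\alpha_{n_i}})$) and all $\neg\,v_\alpha=v_\beta$. $\mathcal N_0$ consists of all $\neg R_i(v_{\alpha_1},\dots,v_{\alpha_{n_i}})$, all $v_\alpha=v_\beta$ and all $\neg\,v_\alpha=v_\beta$.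 $\mathcal P_{\infty\omega}$ (resp. $\mathcal N_{\infty\omega}$) is the closure of $\mathcal P_0$ (resp. $\mathcal N_0$) under $\forall v$, $\exists v$ and conjunctions and disjunctions of arbitrary sets of formulas (no negation). For a class $\mathcal F$ of formulas, $\mathbb X\equiv_{\mathcal F}\mathbb Y$ means $\mathbb X$ and $\mathbb Y$ satisfy the same sentences of $\mathcal F$. *)

(* Defs.v *)
From mathcomp Require Import all_boot.
Set Implicit Arguments. Unset Strict Implicit. Unset Printing Implicit Defensive.

Section Lang.
Variables (I : Type) (ar : I -> nat).

Record structure := Structure {
  carrier :> Type;
  rel : forall i : I, ('I_(ar i) -> carrier) -> Prop }.
Arguments rel : clear implicits.

Definition bijective_map (X Y : Type) (F : X -> Y) :=
  exists G : Y -> X, (forall x, G (F x) = x) /\ (forall y, F (G y) = y).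

Definition condensation (X Y : structure) (F : X -> Y) :=
  bijective_map F /\
  forall i (xs : 'I_(ar i) -> X), rel X i xs -> rel Y i (fun k => F (xs k)).

Definition isomorphism (X Y : structure) (F : X -> Y) :=
  bijective_map F /\
  forall i (xs : 'I_(ar i) -> X), rel X i xs <-> rel Y i (fun k => F (xs k)).

Definition isomorphic (X Y : structure) := exists F : X -> Y, isomorphism F.

Definition cond_equiv (X Y : structure) :=
  (exists F : X -> Y, condensation F) /\ (exists G : Y -> X, condensation G).

Definition weakly_reversible (X : structure) :=
  forall Y : structure, cond_equiv Y X -> isomorphic Y X.

(* countable = at most countable *)
Definition countable (X : structure) :=
  exists f : X -> nat, forall x y, f x = f y -> x = y.

(* Infinitary formulas in negation normal form over variables v_n (n : nat):
   atoms, negated atoms, conjunctions/disjunctions of arbitrary families,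
   quantifiers. *)
Inductive form : Type :=
| FEq   : nat -> nat -> form
| FNeq  : nat -> nat -> form
| FRel  : forall i : I, ('I_(ar i) -> nat) -> form
| FNRel : forall i : I, ('I_(ar i) -> nat) -> form
| FConj : forall J : Type, (J -> form) -> form
| FDisj : forall J : Type, (J -> form) -> form
| FAll  : nat -> form -> form
| FEx   : nat -> form -> form.

Fixpoint isP (f : form) : Prop :=
  match f with
  | FEq _ _ | FNeq _ _ | FRel _ _ => True
  | FNRel _ _ => False
  | FConj _ g | FDisj _ g => forall j, isP (g j)
  | FAll _ g | FEx _ g => isP g
  end.

Fixpoint isN (f : form) : Prop :=
  match f with
  | FEq _ _ | FNeq _ _ | FNRel _ _ => True
  | FRel _ _ => False
  | FConj _ g | FDisj _ g => forall j, isN (g j)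
  | FAll _ g | FEx _ g => isN g
  end.

Fixpoint closed_in (bound : nat -> Prop) (f : form) : Prop :=
  match f with
  | FEq a b | FNeq a b => bound a /\ bound b
  | FRel _ v | FNRel _ v => forall k, bound (v k)
  | FConj _ g | FDisj _ g => forall j, closed_in bound (g j)
  | FAll n g | FEx n g => closed_in (fun m => m = n \/ bound m) g
  end.

Definition sentence (f : form) := closed_in (fun _ => False) f.

Definition upd (X : Type) (e : nat -> option X) (n : nat) (x : X) :=
  fun m => if Nat.eqb m n then Some x else e m.

(* Satisfaction under a partial assignment (partial so that empty
   structures are handled correctly; for sentences no unbound variable
   is ever looked up). *)
Fixpoint sat (M : structure) (e : nat -> option M) (f : form) : Prop :=
  match f with
  | FEq a b => exists x y, e a = Some x /\ e b = Some y /\ x = y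
  | FNeq a b => exists x y, e a = Some x /\ e b = Some y /\ x <> y
  | FRel i v => exists xs : 'I_(ar i) -> M,
      (forall k, e (v k) = Some (xs k)) /\ rel M i xs
  | FNRel i v => exists xs : 'I_(ar i) -> M,
      (forall k, e (v k) = Some (xs k)) /\ ~ rel M i xs
  | FConj _ g => forall j, sat e (g j)
  | FDisj _ g => exists j, sat e (g j)
  | FAll n g => forall x : M, sat (upd e n x) g
  | FEx n g => exists x : M, sat (upd e n x) g
  end.

Definition models (M : structure) (f : form) := sat (fun _ => None : option M) f.

Definition P_equiv (X Y : structure) :=
  forall f, sentence f -> isP f -> (models X f <-> models Y f).

Definition models_PN_theory_of (X Y : structure) :=
  forall f, sentence f -> (isP f \/ isN f) -> models X f -> models Y f.

End Lang.
Arguments rel {I ar} s i xs.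

(* Main.v *)
Require Import Defs.
From mathcomp Require Import all_boot.
From Stdlib Require Import Classical ClassicalEpsilon FunctionalExtensionality Lia PeanoNat.

Section Proofs.
Variables (I : Type) (ar : I -> nat).

Lemma closed_mono (f : form ar) : forall (B B' : nat -> Prop),
  (forall m, B m -> B' m) -> closed_in B f -> closed_in B' f.
Proof.
induction f as [a b|a b|i v|i v|J g IH|J g IH|n g IH|n g IH] => B B' HB /=.
- by case=> ??; split; apply: HB.
- by case=> ??; split; apply: HB.
- by move=> H k; apply: HB.
- by move=> H k; apply: HB.
- by move=> H j; apply: (IH j B).
- by move=> H j; apply: (IH j B).
- apply: IH => m [->|Hm]; [by left| by right; apply: HB].
- apply: IH => m [->|Hm]; [by left| by right; apply: HB].
Qed.

Lemma pres (M N : structure ar) (F : M -> N) (hF : condensation F) (f : form ar) :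
  isP f -> forall e, sat e f -> sat (fun m => omap F (e m)) f.
Proof.
case: hF => [[G [GF FG]] hR].
induction f as [a b|a b|i v|i v|J g IH|J g IH|n g IH|n g IH] => //= hP e.
- case=> x [y [ea [eb exy]]]; exists (F x), (F y); by rewrite ea eb exy.
- case=> x [y [ea [eb exy]]]; exists (F x), (F y); rewrite ea eb; do 2!split => //.
  by move=> E; apply: exy; rewrite -(GF x) -(GF y) E.
- case=> xs [exs r]; exists (fun k => F (xs k)); split; last exact: hR.
  by move=> k; rewrite exs.
- by move=> H j; apply: IH.
- by case=> j H; exists j; apply: IH.
- move=> H y.
  have -> : upd (fun m => omap F (e m)) n y = (fun m => omap F (upd e n (G y) m)).
    apply: functional_extensionality => m; rewrite /upd.
    by case: (Nat.eqb m n) => //=; rewrite FG.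
  exact: IH.
- case=> x H; exists (F x).
  have -> : upd (fun m => omap F (e m)) n (F x) = (fun m => omap F (upd e n x m)).
    apply: functional_extensionality => m; rewrite /upd.
    by case: (Nat.eqb m n).
  exact: IH.
Qed.

Lemma pres_models (M N : structure ar) (F : M -> N) (hF : condensation F) (f : form ar) :
  isP f -> models M f -> models N f.
Proof. move=> hP H; have := @pres M N F hF f hP _ H; by []. Qed.

Definition comp (M : structure ar) : structure ar :=
  @Structure I ar (carrier M) (fun i xs => ~ Defs.rel M i xs).

Fixpoint dual (f : form ar) : form ar :=
  match f with
  | FEq a b => FEq ar a b
  | FNeq a b => FNeq ar a b
  | FRel i v => FNRel v
  | FNRel i v => FRel v
  | FConj J g => FConj (fun j => dual (g j))
  | FDisj J g => FDisj (fun j => dual (g j))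
  | FAll n g => FAll n (dual g)
  | FEx n g => FEx n (dual g)
  end.

Lemma dual_isP f : isN f -> isP (dual f).
Proof.
induction f as [a b|a b|i v|i v|J g IH|J g IH|n g IH|n g IH] => //= H.
all: try move=> j; by apply: IH.
Qed.

Lemma dual_closed f : forall B, closed_in B f -> closed_in B (dual f).
Proof.
induction f as [a b|a b|i v|i v|J g IH|J g IH|n g IH|n g IH] => //= B H.
all: try move=> j; by apply: IH.
Qed.

Lemma dual_sat (M : structure ar) f : forall (e : nat -> option M),
  @sat I ar (comp M) e (dual f) <-> sat e f.
Proof.
induction f as [a b|a b|i v|i v|J g IH|J g IH|n g IH|n g IH] => e /=.
- tauto.
- tauto.
- split; case=> xs [H1 H2]; exists xs; split => //=; move: H2 => /=;
    case: (classic (Defs.rel M i xs)); tauto.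
- tauto.
- split => H j; [apply/IH|apply/(IH j)]; exact: H.
- split; case=> j H; exists j; [apply/IH|apply/(IH j)]; exact: H.
- split => H x; [apply/IH|apply/(IH)]; exact: H.
- split; case=> x H; exists x; [apply/IH|apply/(IH)]; exact: H.
Qed.

Lemma comp_cond (M N : structure ar) (F : M -> N) :
  condensation F -> exists G : comp N -> comp M, condensation G.
Proof.
case=> [[G [GF FG]] hR]; exists G; split.
- by exists F; split.
- move=> i xs /= H1 H2; apply: H1.
  have -> : xs = (fun k => F (G (xs k))) by apply: functional_extensionality => k; rewrite FG.
  exact: hR.
Qed.

Lemma presN (M N : structure ar) (G : N -> M) (hG : condensation G) f :
  isN f -> models M f -> models N f.
Proof.
move=> hN H.
case: (@comp_cond N M G hG) => F hF.
have := @pres_models (comp M) (comp N) F hF (dual f) (@dual_isP f hN).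
rewrite /models => K.
apply/(@dual_sat N f); apply: K; apply/(@dual_sat M f); exact: H.
Qed.

Section BF.
Variables (X Y : structure ar) (fX : X -> nat) (fY : Y -> nat).
Hypotheses (fXi : forall x y, fX x = fX y -> x = y) (fYi : forall x y, fY x = fY y -> x = y).
Variables (x0 : X) (y0 : Y).
Hypothesis H : forall f, sentence f -> isP f -> models X f -> models Y f.

Definition le n (eX : nat -> option X) (eY : nat -> option Y) :=
  forall f, isP f -> closed_in (fun m => lt m n) f -> sat eX f -> sat eY f.

Lemma le0 : le 0 (fun _ => None) (fun _ => None).
Proof.
move=> f hP hC; apply: H => //; apply: (@closed_mono f (fun m => lt m 0)) => // m /=; lia.
Qed.

Lemma cl_step n (f : form ar) : closed_in (fun m => lt m n.+1) f ->
  closed_in (fun m => m = n \/ lt m n) f.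
Proof. apply: closed_mono => m /=; lia. Qed.

Lemma forth n eX eY : le n eX eY -> forall a, exists b, le n.+1 (upd eX n a) (upd eY n b).
Proof.
move=> hle a; apply: NNPP => hn.
have hb : forall b : Y, exists f, isP f /\ closed_in (fun m => lt m n.+1) f /\
    sat (upd eX n a) f /\ ~ sat (upd eY n b) f.
  move=> b; apply: NNPP => hb; apply: hn; exists b => f hP hC hS.
  apply: NNPP => hS'; apply: hb; exists f; tauto.
pose phi b := proj1_sig (constructive_indefinite_description _ (hb b)).
have phiP b : isP (phi b) /\ closed_in (fun m => lt m n.+1) (phi b) /\
    sat (upd eX n a) (phi b) /\ ~ sat (upd eY n b) (phi b).
  exact: (proj2_sig (constructive_indefinite_description _ (hb b))).
have := hle (FEx n (FConj phi)).
case.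
- move=> j /=; exact: (proj1 (phiP j)).
- move=> j /=; apply: cl_step; exact: (proj1 (proj2 (phiP j))).
- exists a => j; exact: (proj1 (proj2 (proj2 (phiP j)))).
- move=> y Hy; exact: (proj2 (proj2 (proj2 (phiP y))) (Hy y)).
Qed.

Lemma back n eX eY : le n eX eY -> forall b, exists a, le n.+1 (upd eX n a) (upd eY n b).
Proof.
move=> hle b; apply: NNPP => hn.
have ha : forall a : X, exists f, isP f /\ closed_in (fun m => lt m n.+1) f /\
    sat (upd eX n a) f /\ ~ sat (upd eY n b) f.
  move=> a; apply: NNPP => ha; apply: hn; exists a => f hP hC hS.
  apply: NNPP => hS'; apply: ha; exists f; tauto.
pose phi a := proj1_sig (constructive_indefinite_description _ (ha a)).
have phiP a : isP (phi a) /\ closed_in (fun m => lt m n.+1) (phi a) /\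
    sat (upd eX n a) (phi a) /\ ~ sat (upd eY n b) (phi a).
  exact: (proj2_sig (constructive_indefinite_description _ (ha a))).
have := hle (FAll n (FDisj phi)).
case/(_ _ _ _ b).
- move=> j /=; exact: (proj1 (phiP j)).
- move=> j /=; apply: cl_step; exact: (proj1 (proj2 (phiP j))).
- move=> x; exists x; exact: (proj1 (proj2 (proj2 (phiP x)))).
- move=> j Hj; exact: (proj2 (proj2 (proj2 (phiP j))) Hj).
Qed.


Definition state n := {p : (nat -> option X) * (nat -> option Y) | le n p.1 p.2}.
Definition pickX j := epsilon (inhabits x0) (fun x => fX x = j).
Definition pickY j := epsilon (inhabits y0) (fun y => fY y = j).

Definition ext n (p : state n) :
  {ab : X * Y | le n.+1 (upd (sval p).1 n ab.1) (upd (sval p).2 n ab.2)} :=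
  match odd n with
  | true => let s := constructive_indefinite_description _
                (@back n _ _ (svalP p) (pickY n./2)) in
            exist _ (sval s, pickY n./2) (svalP s)
  | false => let s := constructive_indefinite_description _
                (@forth n _ _ (svalP p) (pickX n./2)) in
            exist _ (pickX n./2, sval s) (svalP s)
  end.

Fixpoint st n : state n :=
  match n with
  | 0 => exist _ (fun _ => None, fun _ => None) le0
  | S k => let p := st k in let q := @ext k p in
      exist _ (upd (sval p).1 k (sval q).1, upd (sval p).2 k (sval q).2) (svalP q)
  end.

Definition aa n := (sval (@ext n (st n))).1.
Definition bb n := (sval (@ext n (st n))).2.

Lemma stE n m : lt m n -> (sval (st n)).1 m = Some (aa m) /\ (sval (st n)).2 m = Some (bb m).
Proof.
elim: n => [|n IH] Hm; first lia.
rewrite /= /upd /aa /bb.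
case: (Nat.eqb_spec m n) => [->|ne]; first by [].
apply: IH; lia.
Qed.

Lemma aa_even j : aa j.*2 = pickX j.
Proof. by rewrite /aa /ext odd_double /= half_double. Qed.

Lemma bb_odd j : bb j.*2.+1 = pickY j.
Proof. by rewrite /bb /ext /= odd_double /= uphalf_double. Qed.

Lemma aa_F x : aa (fX x).*2 = x.
Proof.
rewrite aa_even; apply: fXi; rewrite /pickX.
by apply: (epsilon_spec (inhabits x0) (fun z => fX z = fX x)); exists x.
Qed.

Lemma bb_G y : bb (fY y).*2.+1 = y.
Proof.
rewrite bb_odd; apply: fYi; rewrite /pickY.
by apply: (epsilon_spec (inhabits y0) (fun z => fY z = fY y)); exists y.
Qed.

Lemma eq_ab m m' : aa m = aa m' <-> bb m = bb m'.
Proof.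
pose N := S (Nat.max m m').
have [h1 h2] := @stE N m ltac:(lia).
have [h1' h2'] := @stE N m' ltac:(lia).
have hle := svalP (st N).
split => E.
- have := hle (FEq ar m m') Logic.I.
  case.
  + split => /=; lia.
  + by exists (aa m), (aa m').
  + move=> x [y [ex [ey exy]]]; move: ex ey; rewrite h2 h2' => -[E1] [E2]; by rewrite -E1 -E2 in exy.
- apply: NNPP => ne.
  have := hle (FNeq ar m m') Logic.I.
  case.
  + split => /=; lia.
  + by exists (aa m), (aa m').
  + move=> x [y [ex [ey exy]]]; move: ex ey; rewrite h2 h2' => -[E1] [E2]; by rewrite -E1 -E2 in exy.
Qed.

Lemma rel_ab i (ms : 'I_(ar i) -> nat) :
  Defs.rel X i (fun k => aa (ms k)) -> Defs.rel Y i (fun k => bb (ms k)).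
Proof.
move=> hR.
pose N := (\max_(k < ar i) ms k).+1.
have hN k : lt (ms k) N by apply/ltP; rewrite ltnS; exact: leq_bigmax.
have hle := svalP (st N).
have := hle (FRel ms) Logic.I.
case.
- move=> k /=; exact: hN.
- exists (fun k => aa (ms k)); split => // k; exact: (proj1 (@stE N (ms k) (hN k))).
- move=> ys [eys hY].
  have -> : (fun k => bb (ms k)) = ys; last by [].
  apply: functional_extensionality => k.
  have := eys k; rewrite (proj2 (@stE N (ms k) (hN k))); by case.
Qed.

Lemma main_cond : exists F : X -> Y, condensation F.
Proof.
exists (fun x => bb (fX x).*2); split.
- exists (fun y => aa (fY y).*2.+1); split.
  + move=> x; rewrite -{2}(aa_F x); apply/(eq_ab _ _); exact: bb_G.
  + move=> y; rewrite -[RHS](bb_G y); apply/(eq_ab _ _); exact: aa_F.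
- move=> i xs hR; apply: (@rel_ab i (fun k => (fX (xs k)).*2)).
  have -> : (fun k => aa (fX (xs k)).*2) = xs; last by [].
  apply: functional_extensionality => k; exact: aa_F.
Qed.

End BF.

Lemma cond_of_P (X Y : structure ar) : countable X -> countable Y ->
  (forall f, sentence f -> isP f -> models X f -> models Y f) ->
  exists F : X -> Y, condensation F.
Proof.
move=> [fX fXi] [fY fYi] H.
case: (classic (inhabited X)) => [[x0]|nX].
- have [y0 _] : exists y : Y, True.
    have := H (FEx 0 (FEq ar 0 0)).
    case.
    + by split; left.
    + by [].
    + by exists x0, x0, x0.
    + by move=> y _; exists y.
  exact: (@main_cond X Y fX fY fXi fYi x0 y0 H).
- have nY : ~ inhabited Y.
    move=> [y].
    have := H (FAll 0 (FDisj (fun f : False => match f with end))).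
    case/(_ _ _ _ y) => //.
    by move=> x; exfalso; apply: nX.
  exists (fun x => False_rect _ (nX (inhabits x))); split.
  + exists (fun y => False_rect _ (nY (inhabits y))); split.
    * by move=> x; exfalso; apply: nX.
    * by move=> y; exfalso; apply: nY.
  + move=> i xs hR.
    have := H (FRel (fun _ : 'I_(ar i) => 0)).
    case.
    * by move=> k; apply: nX; exact: (inhabits (xs k)).
    * by [].
    * exists xs; split => // k; exfalso; apply: nX; exact: (inhabits (xs k)).
    * move=> ys [_ hY].
      have -> : (fun k => False_rect Y (nX (inhabits (xs k)))) = ys; last by [].
      apply: functional_extensionality => k; exfalso; apply: nX; exact: (inhabits (xs k)).
Qed.

Lemma dual_dual f : dual (dual f) = f.
Proof.
induction f as [a b|a b|i v|i v|J g IH|J g IH|n g IH|n g IH] => //=.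
- by congr FConj; apply: functional_extensionality => j; apply: IH.
- by congr FDisj; apply: functional_extensionality => j; apply: IH.
- by rewrite IH.
- by rewrite IH.
Qed.

Lemma dual_isN f : isP f -> isN (dual f).
Proof.
induction f as [a b|a b|i v|i v|J g IH|J g IH|n g IH|n g IH] => //= H.
all: try move=> j; by apply: IH.
Qed.

Lemma comp_cond' (M N : structure ar) (F : comp M -> comp N) :
  condensation F -> exists G : N -> M, condensation G.
Proof.
case=> [[G [GF FG]] hR]; exists G; split.
- by exists F; split.
- move=> i ys H1; apply: NNPP => H2.
  have := hR i (fun k => G (ys k)) H2 => /=.
  have -> : (fun k => F (G (ys k))) = ys by apply: functional_extensionality => k; rewrite FG.
  by [].
Qed.

End Proofs.
Arguments cond_of_P {I ar X Y}.
Arguments pres_models {I ar M N F} hF {f}.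
Arguments presN {I ar M N G} hG {f}.
Arguments comp_cond' {I ar M N F}.
Arguments dual_sat {I ar M f e}.
Arguments dual_closed {I ar f B}.
Arguments dual_isN {I ar f}.
Arguments dual_dual {I ar} f.
Arguments comp {I ar}.

Theorem theorem4p3 (I : Type) (ar : I -> nat) (X : structure ar)
  (hX : countable X) :
  (weakly_reversible X <->
     (forall Y : structure ar, countable Y -> P_equiv X Y -> isomorphic Y X))
  /\
  ((forall Y : structure ar, countable Y -> P_equiv X Y -> isomorphic Y X) <->
     (forall Y : structure ar, countable Y -> models_PN_theory_of X Y ->
        isomorphic Y X)).
Proof.
split; split.
- move=> WR Y hY hP; apply: WR; split.
  + apply: (cond_of_P hY hX) => f s p; exact: (proj2 (hP f s p)).
  + apply: (cond_of_P hX hY) => f s p; exact: (proj1 (hP f s p)).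
- move=> Hb Y [[F hF] [G hG]]; apply: Hb.
  + case: hX => fX fXi; exists (fun y => fX (F y)) => y y' E.
    case: hF => [[F' [K _]] _]; by rewrite -(K y) -(K y') (fXi _ _ E).
  + move=> f s p; split; [exact: (pres_models hG) | exact: (pres_models hF)].
- move=> Hb Y hY hT; apply: Hb => //.
  have [G hG] : exists G : X -> Y, condensation G.
    apply: (cond_of_P hX hY) => f s p; apply: hT => //; by left.
  have [F hF] : exists F : comp X -> comp Y, condensation F.
    apply: (@cond_of_P _ _ (comp X) (comp Y) hX hY) => f s p m.
    rewrite /models -(dual_dual f); apply/dual_sat; apply: hT.
    + exact: dual_closed.
    + by right; apply: dual_isN.
    + by apply/(@dual_sat _ _ X); rewrite dual_dual.
  have [K hK] := comp_cond' hF.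
  move=> f s p; split; [exact: (pres_models hG) | exact: (pres_models hK)].
- move=> Hc Y hY hP; apply: Hc => // f s [p|n] m.
  + exact: (proj1 (hP f s p)).
  + have [G hG] : exists G : Y -> X, condensation G.
      apply: (cond_of_P hY hX) => g s' p'; exact: (proj2 (hP g s' p')).
    exact: (presN hG).
Qed.
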